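(* For every positive integer $k$, $$\sum_{j=0}^{2k-1} (-1)^j \sin^2\left(\frac{(2j+1)\pi}{8k+2}\right) = \frac{-\sin^2\left(\frac{2k\pi}{4k+1}\right)}{2\cos\left(\frac{\pi}{4k+1}\right)}$$ and $$\sum_{j=0}^{2k} (-1)^j \sin^2\left(\frac{(2j+1)\pi}{8k+6}\right) = \frac{1}{2} - \frac{\cos^2\left(\frac{(2k+1)\pi}{4k+3}\right)}{2\cos\left(\frac{\pi}{4k+3}\right)}.$$ Consequently $$\lim_{k\to\infty}\sum_{j=0}^{2k-1} (-1)^j \sin^2\left(\frac{(2j+1)\pi}{8k+2}\right) = -\frac12 \quad\text{and}\quad \lim_{k\to\infty}\sum_{j=0}^{2k} (-1)^j \sin^2\left(\frac{(2j+1)\pi}{8k+6}\right) = \frac12.$$ *)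

(* Defs.v *)
From Stdlib Require Import Reals.
From Coquelicot Require Import Coquelicot.
Open Scope R_scope.

Definition S1 (k : nat) : R :=
  sum_n_m (fun j => (-1) ^ j * (sin ((2 * INR j + 1) * PI / (8 * INR k + 2))) ^ 2)
    0 (2 * k - 1).

Definition S2 (k : nat) : R :=
  sum_n_m (fun j => (-1) ^ j * (sin ((2 * INR j + 1) * PI / (8 * INR k + 6))) ^ 2)
    0 (2 * k).

(* Main.v *)
Require Import Defs.
From Stdlib Require Import Reals Lra Lia.
From Coquelicot Require Import Coquelicot.
Open Scope R_scope.

Lemma keyG (D : R) (m : nat) : D <> 0 ->
  4 * cos (2 * (PI / D)) *
  sum_n (fun j => (-1) ^ j * (sin ((2 * INR j + 1) * PI / D)) ^ 2) m =
  cos (2 * (PI / D)) * (1 - (-1) ^ (S m))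
  - (1 - (-1) ^ (S m) * cos (2 * INR (S m) * (2 * (PI / D)))).
Proof.
  intros HD.
  set (c := cos (2 * (PI / D))).
  induction m as [|m IH].
  - rewrite sum_O. simpl pow. rewrite Rmult_1_r, Rmult_1_l.
    set (t := PI / D).
    replace ((2 * 0 + 1) * PI / D) with t by (unfold t; field; auto).
    replace (2 * INR 1 * (2 * t)) with (2 * (2 * t)) by (simpl; ring).
    unfold c; fold t.
    rewrite (cos_2a_sin (2*t)), (cos_2a_sin t).
    rewrite sin_2a.
    pose proof (sin2_cos2 t). unfold Rsqr in H. nra.
  - rewrite sum_Sn. unfold plus; simpl (AbelianMonoid.plus _ _).
    set (s := (-1) ^ S m) in *.
    assert (Hs : (-1) ^ S (S m) = - s) by (unfold s; simpl; ring).
    rewrite Hs.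
    set (t := PI / D) in *.
    set (y := (2 * INR (S m) + 1) * PI / D).
    assert (H1 : sin y ^ 2 = (1 - cos (2 * y)) / 2) by (rewrite cos_2a_sin; field).
    assert (Ha : 2 * INR (S (S m)) * (2 * t) = 2 * y + 2 * t)
      by (unfold y, t; rewrite !S_INR; field; auto).
    assert (Hb : 2 * INR (S m) * (2 * t) = 2 * y - 2 * t)
      by (unfold y, t; rewrite !S_INR; field; auto).
    rewrite Hb in IH. rewrite Ha.
    rewrite H1.
    assert (Hc : cos (2*y + 2*t) + cos (2*y - 2*t) = 2 * c * cos (2 * y))
      by (unfold c; rewrite cos_plus, cos_minus; ring).
    assert (Hd : s * (cos (2*y + 2*t) + cos (2*y - 2*t)) = s * (2 * c * cos (2 * y)))
      by (rewrite Hc; reflexivity).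
    lra.
Qed.

Lemma posk (k : nat) : 1 <= INR (S k).
Proof. rewrite S_INR; pose proof (pos_INR k); lra. Qed.

Lemma cpos (K a : R) : 1 <= K -> 0 < a -> 0 < cos (PI / (4 * K + a)).
Proof.
  intros HK Ha. pose proof PI_RGT_0.
  apply cos_gt_0.
  - assert (0 < PI / (4*K+a)) by (apply Rdiv_lt_0_compat; lra). lra.
  - apply (Rmult_lt_reg_r (4*K+a)); [lra|].
    unfold Rdiv. rewrite Rmult_assoc, Rinv_l by lra. nra.
Qed.

Lemma S1_closed (k : nat) : (1 <= k)%nat ->
     S1 k = - (sin (2 * INR k * PI / (4 * INR k + 1))) ^ 2
              / (2 * cos (PI / (4 * INR k + 1))).
Proof.
  intros Hk. destruct k as [|k]; [lia|].
  unfold S1. replace (2 * S k - 1)%nat with (S (2 * k)) by lia.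
  pose proof (posk k) as HK.
  set (K := INR (S k)) in *.
  assert (HD : 8 * K + 2 <> 0) by lra.
  pose proof (keyG (8*K+2) (S (2*k)) HD) as E. unfold sum_n in E.
  replace (S (S (2*k))) with (2 * S k)%nat in E by lia. rewrite pow_1_even in E.
  replace (2 * (PI / (8 * K + 2))) with (PI / (4 * K + 1)) in E by (field; lra).
  rewrite mult_INR in E. fold K in E.
  replace (INR 2) with 2 in E by (simpl; ring).
  replace (2 * (2 * K) * (PI / (4 * K + 1))) with (2 * (2 * K * PI / (4 * K + 1))) in E by (field; lra).
  rewrite cos_2a_sin in E.
  pose proof (cpos K 1 HK ltac:(lra)) as Hc.
  set (c := cos (PI / (4 * K + 1))) in *.
  set (G := sum_n_m _ _ _) in *.
  set (s := sin _) in *.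
  apply Rmult_eq_reg_l with (4 * c); [ rewrite E; field; lra | lra ].
Qed.

Lemma S2_closed (k : nat) : (1 <= k)%nat ->
  S2 k = 1 / 2 - (cos ((2 * INR k + 1) * PI / (4 * INR k + 3))) ^ 2
              / (2 * cos (PI / (4 * INR k + 3))).
Proof.
  intros Hk. destruct k as [|k]; [lia|].
  unfold S2.
  pose proof (posk k) as HK.
  set (K := INR (S k)) in *.
  assert (HD : 8 * K + 6 <> 0) by lra.
  pose proof (keyG (8*K+6) (2 * S k) HD) as E. unfold sum_n in E.
  rewrite pow_1_odd in E.
  replace (2 * (PI / (8 * K + 6))) with (PI / (4 * K + 3)) in E by (field; lra).
  rewrite S_INR, mult_INR in E. fold K in E.
  replace (INR 2) with 2 in E by (simpl; ring).
  replace (2 * (2 * K + 1) * (PI / (4 * K + 3))) with (2 * ((2 * K + 1) * PI / (4 * K + 3))) in E by (field; lra).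
  rewrite cos_2a_cos in E.
  pose proof (cpos K 3 HK ltac:(lra)) as Hc.
  set (c := cos (PI / (4 * K + 3))) in *.
  set (G := sum_n_m _ _ _) in *.
  set (s := cos _) in *.
  apply Rmult_eq_reg_l with (4 * c); [ rewrite E; field; lra | lra ].
Qed.

Definition h1 (x : R) : R := - (sin (2 * PI / (4 + x))) ^ 2 / (2 * cos (PI * x / (4 + x))).
Definition h2 (x : R) : R := 1 / 2 - (cos ((2 + x) * PI / (4 + 3 * x))) ^ 2 / (2 * cos (PI * x / (4 + 3 * x))).

Lemma inv_lim : is_lim_seq (fun n => / INR n) 0.
Proof.
  change (Finite 0) with (Rbar_inv p_infty).
  apply is_lim_seq_inv; [exact is_lim_seq_INR| discriminate].
Qed.

Lemma h1_cont : continuity_pt h1 0.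
Proof.
  apply continuity_pt_filterlim. apply (@ex_derive_continuous R_AbsRing R_NormedModule).
  unfold h1. auto_derive. repeat split; try lra.
  replace (PI * 0 * / (4 + 0)) with 0 by field. rewrite cos_0. lra.
Qed.

Lemma h2_cont : continuity_pt h2 0.
Proof.
  apply continuity_pt_filterlim. apply (@ex_derive_continuous R_AbsRing R_NormedModule).
  unfold h2. auto_derive. repeat split; try lra.
  replace (PI * 0 * / (4 + 3 * 0)) with 0 by field. rewrite cos_0. lra.
Qed.

Theorem proposition4 :
  (forall k : nat, (1 <= k)%nat ->
     S1 k = - (sin (2 * INR k * PI / (4 * INR k + 1))) ^ 2
              / (2 * cos (PI / (4 * INR k + 1)))
  /\ S2 k = 1 / 2 - (cos ((2 * INR k + 1) * PI / (4 * INR k + 3))) ^ 2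
              / (2 * cos (PI / (4 * INR k + 3))))
  /\ is_lim_seq S1 (- (1 / 2))
  /\ is_lim_seq S2 (1 / 2).
Proof.
  split; [intros k Hk; split; [apply S1_closed | apply S2_closed]; exact Hk|].
  split.
  - assert (L := is_lim_seq_continuous h1 _ 0 h1_cont inv_lim).
    replace (h1 0) with (- (1 / 2)) in L.
    2:{ unfold h1. replace (2 * PI / (4 + 0)) with (PI / 2) by field.
        replace (PI * 0 / (4 + 0)) with 0 by field.
        rewrite sin_PI2, cos_0. field. }
    apply (is_lim_seq_ext_loc _ _ _ ) with (2 := L).
    exists 1%nat. intros n Hn. rewrite S1_closed by exact Hn.
    assert (Hn' : 0 < INR n) by (apply lt_0_INR; lia).
    unfold h1. f_equal; [f_equal; f_equal; f_equal; field; lra|].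
    f_equal. f_equal. field. lra.
  - assert (L := is_lim_seq_continuous h2 _ 0 h2_cont inv_lim).
    replace (h2 0) with (1 / 2) in L.
    2:{ unfold h2. replace ((2 + 0) * PI / (4 + 3 * 0)) with (PI / 2) by field.
        replace (PI * 0 / (4 + 3 * 0)) with 0 by field.
        rewrite cos_PI2, cos_0. field. }
    apply (is_lim_seq_ext_loc _ _ _ ) with (2 := L).
    exists 1%nat. intros n Hn. rewrite S2_closed by exact Hn.
    assert (Hn' : 0 < INR n) by (apply lt_0_INR; lia).
    unfold h2. f_equal. f_equal; [f_equal; f_equal; field; lra|].
    f_equal. f_equal. field. lra.
Qed.
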